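(* For every $\lambda\in\Lambda$ one has $W_\lambda=\bigcap_{i=0}^{r+1}\mathrm{Stab}(R_i^\lambda)$, where $\mathrm{Stab}(X)=\{g\in W\mid g(X)=X\}$ for $X\subseteq\mathbb{Z}$.
   Context: Fix integers $r\ge 0$, $d\ge 2$, set $D=2d+2$. Let $W$ be the group of bijections $g:\mathbb{Z}\to\mathbb{Z}$ with $g(i+D)=g(i)+D$, $g(-i)=-g(i)$ for all $i$; it is a Coxeter group with simple reflections $s_0,\dots,s_d$ where ($W$-elements being determined by their values on $1,\dots,d$) $s_0(1)=-1$, $s_0(k)=k$ ($2\le k\le d$); $s_d(d)=d+2$, $s_d(k)=k$ ($k<d$); and $s_i$ ($1\le i\le d-1$) swaps $i,i+1$ and fixes the other $k\in[1..d]$. Let $\Lambda$ be the set of $\lambda=(\lambda_0,\dots,\lambda_{r+1})\in\mathbb{N}^{r+2}$ with $\sum\lambda_i=d$; put $\lambda_{0,i}=\lambda_0+\dots+\lambda_i$. $W_\lambda$ is the subgroup generated by $\{s_0,\dots,s_d\}\setminus\{s_{\lambda_{0,0}},s_{\lambda_{0,1}},\dots,s_{\lambda_{0,r}}\}$. Define integer intervals $R_0^\lambda=[-\lambda_0..\lambda_0]$, $R_i^\lambda=(\lambda_{0,i-1}..\lambda_{0,i}]$ for $1\le i\le r$, $R^\lambda_{r+1}=[d+1-\lambda_{r+1}..d+1+\lambda_{r+1}]$ (here $[a..b]$, $(a..b]$ denote integer intervals). *)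

(* Defs.v *)
From Stdlib Require Import ZArith List Lia.
Import ListNotations.
Open Scope Z_scope.

Definition DD (d : Z) : Z := 2 * d + 2.

Definition inW (d : Z) (g : Z -> Z) : Prop :=
  (forall x y, g x = g y -> x = y) /\
  (forall y, exists x, g x = y) /\
  (forall i, g (i + DD d) = g i + DD d) /\
  (forall i, g (- i) = - g i).

(* The unique element of W whose values on 1..d are given by f:
   g(0)=0, g(d+1)=d+1, g(k)=f(k) for 1<=k<=d, g(D-k)=D-f(k) for 1<=k<=d,
   extended D-periodically (g(x+D)=g(x)+D). *)
Definition ext (d : Z) (f : Z -> Z) (x : Z) : Z :=
  let q := x / DD d in
  let r := x mod DD d in
  q * DD d +
  (if r =? 0 then 0
   else if r <=? d then f r
   else if r =? d + 1 then d + 1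
   else DD d - f (DD d - r)).

Definition sref (d : Z) (j : Z) : Z -> Z :=
  if j =? 0 then ext d (fun k => if k =? 1 then -1 else k)
  else if j =? d then ext d (fun k => if k =? d then d + 2 else k)
  else ext d (fun k => if k =? j then j + 1 else if k =? j + 1 then j else k).

Inductive gen (d : Z) (Gens : (Z -> Z) -> Prop) : (Z -> Z) -> Prop :=
| gen_gen g : Gens g -> gen d Gens g
| gen_id : gen d Gens (fun x => x)
| gen_comp f g : gen d Gens f -> gen d Gens g -> gen d Gens (fun x => f (g x))
| gen_inv f h : gen d Gens f -> inW d h -> (forall x, f (h x) = x) -> gen d Gens h
| gen_ext f h : gen d Gens f -> (forall x, f x = h x) -> gen d Gens h.

Definition inLambda (r d : nat) (lam : list nat) : Prop :=
  length lam = (r + 2)%nat /\ list_sum lam = d.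

Definition lamZ (lam : list nat) (i : nat) : Z := Z.of_nat (nth i lam 0%nat).

Definition lam0 (lam : list nat) (i : nat) : Z :=
  Z.of_nat (list_sum (firstn (i + 1) lam)).

Definition Wlam (r d : nat) (lam : list nat) : (Z -> Z) -> Prop :=
  gen (Z.of_nat d)
    (fun g => exists j : Z, 0 <= j <= Z.of_nat d /\
       (forall i : nat, (i <= r)%nat -> j <> lam0 lam i) /\
       g = sref (Z.of_nat d) j).

Definition Rint (r d : nat) (lam : list nat) (i : nat) (x : Z) : Prop :=
  if Nat.eqb i 0 then - lamZ lam 0 <= x <= lamZ lam 0
  else if Nat.eqb i (r + 1) then
    Z.of_nat d + 1 - lamZ lam (r + 1) <= x <= Z.of_nat d + 1 + lamZ lam (r + 1)
  else lam0 lam (i - 1) < x <= lam0 lam i.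

Definition Stab (d : Z) (X : Z -> Prop) (g : Z -> Z) : Prop :=
  inW d g /\
  (forall x, X x -> X (g x)) /\
  (forall y, X y -> exists x, X x /\ g x = y).

(* Main.v *)
Require Import Defs.
From Stdlib Require Import ZArith List Lia Classical FunctionalExtensionality.
Import ListNotations.
Open Scope Z_scope.

Definition PO d (h : Z -> Z) :=
  (forall i, h (i + DD d) = h i + DD d) /\ (forall i, h (- i) = - h i).

Lemma PO_shift d h : PO d h -> forall q x, h (x + q * DD d) = h x + q * DD d.
Proof.
  intros [Hp _] q. induction q using Z.peano_ind; intros x.
  - rewrite !Z.mul_0_l, !Z.add_0_r. reflexivity.
  - rewrite Z.mul_succ_l.
    replace (x + (q * DD d + DD d)) with ((x + q * DD d) + DD d) by lia.
    rewrite Hp, IHq. lia.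
  - specialize (IHq x). rewrite Z.mul_pred_l.
    replace (x + q * DD d) with ((x + (q * DD d - DD d)) + DD d) in IHq by lia.
    rewrite Hp in IHq. lia.
Qed.

Lemma PO_zero d h : PO d h -> h 0 = 0.
Proof. intros [_ Ho]. specialize (Ho 0). simpl in Ho. lia. Qed.

Lemma PO_refl d h : PO d h -> forall y, h (DD d - y) = DD d - h y.
Proof. intros [Hp Ho] y. replace (DD d - y) with (- y + DD d) by lia.
  rewrite Hp, Ho. lia. Qed.

Lemma PO_half d h : PO d h -> h (d + 1) = d + 1.
Proof. intros H. pose proof (PO_refl d h H (d+1)) as E.
  unfold DD in *. replace (2 * d + 2 - (d + 1)) with (d+1) in E by lia. lia. Qed.

Lemma PO_comp d f g : PO d f -> PO d g -> PO d (fun x => f (g x)).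
Proof. intros [Hf Of] [Hg Og]. split; intros i; [rewrite Hg, Hf | rewrite Og, Of]; reflexivity. Qed.

Lemma PO_id d : PO d (fun x => x).
Proof. split; reflexivity. Qed.

Lemma DD_pos d : 0 <= d -> 0 < DD d.
Proof. unfold DD; lia. Qed.

Lemma decomp d x : 0 <= d -> x = x mod DD d + (x / DD d) * DD d /\ 0 <= x mod DD d < DD d.
Proof. intros Hd. pose proof (DD_pos d Hd).
  split. - pose proof (Z.div_mod x (DD d)). lia.
  - apply Z.mod_pos_bound; lia. Qed.

Lemma PO_agree d h1 h2 : 0 <= d -> PO d h1 -> PO d h2 ->
  (forall k, 1 <= k <= d -> h1 k = h2 k) -> forall x, h1 x = h2 x.
Proof.
  intros Hd P1 P2 Hk x.
  destruct (decomp d x Hd) as [E B].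
  rewrite E, (PO_shift d h1 P1), (PO_shift d h2 P2). f_equal.
  set (r := x mod DD d) in *. clearbody r. unfold DD in B.
  destruct (Z.eq_dec r 0) as [->|]. { now rewrite (PO_zero d h1 P1), (PO_zero d h2 P2). }
  destruct (Z_le_gt_dec r d). { apply Hk; lia. }
  destruct (Z.eq_dec r (d+1)) as [->|]. { now rewrite (PO_half d h1 P1), (PO_half d h2 P2). }
  replace r with (DD d - (DD d - r)) by lia.
  rewrite (PO_refl d h1 P1), (PO_refl d h2 P2), Hk; unfold DD in *; lia.
Qed.

Definition br d (f : Z -> Z) r :=
  if r =? 0 then 0
  else if r <=? d then f r
  else if r =? d + 1 then d + 1
  else DD d - f (DD d - r).

Lemma ext_unfold d f x : ext d f x = (x / DD d) * DD d + br d f (x mod DD d).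
Proof. reflexivity. Qed.

Lemma ext_eq d f q r : 0 <= d -> 0 <= r < DD d ->
  ext d f (r + q * DD d) = q * DD d + br d f r.
Proof.
  intros Hd Hr. pose proof (DD_pos d Hd).
  rewrite ext_unfold, Z_div_plus_full, Z_mod_plus_full, Z.div_small, Z.mod_small by lia.
  reflexivity.
Qed.

Lemma ext_val d f k : 1 <= k <= d -> ext d f k = f k.
Proof.
  intros Hk. replace k with (k + 0 * DD d) at 1 by lia.
  rewrite ext_eq by (unfold DD; lia). unfold br.
  destruct (Z.eqb_spec k 0); [lia|]. destruct (Z.leb_spec k d); lia.
Qed.

Lemma ext_PO d f : 0 <= d -> PO d (ext d f).
Proof.
  intros Hd. split; intros i; destruct (decomp d i Hd) as [E B];
  set (r := i mod DD d) in *; set (q := i / DD d) in *; clearbody r q; subst i.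
  - replace (r + q * DD d + DD d) with (r + (q+1) * DD d) by lia.
    rewrite !ext_eq by lia. lia.
  - rewrite ext_eq by lia.
    destruct (Z.eq_dec r 0) as [->|].
    + replace (- (0 + q * DD d)) with (0 + (-q) * DD d) by lia.
      rewrite ext_eq by lia. unfold br. simpl. lia.
    + replace (- (r + q * DD d)) with ((DD d - r) + (-q - 1) * DD d) by lia.
      rewrite ext_eq by lia. unfold br. unfold DD in *.
      destruct (Z.eqb_spec r 0); [lia|].
      destruct (Z.eqb_spec (2*d+2-r) 0); [lia|].
      destruct (Z.leb_spec r d); destruct (Z.leb_spec (2*d+2-r) d);
      destruct (Z.eqb_spec r (d+1)); destruct (Z.eqb_spec (2*d+2-r) (d+1)); try lia.
      replace (2 * d + 2 - (2 * d + 2 - r)) with r by lia. lia.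
Qed.

Lemma inv_from_vals d s : 0 <= d -> PO d s -> (forall k, 1 <= k <= d -> s (s k) = k) ->
  forall x, s (s x) = x.
Proof. intros Hd P H. apply (PO_agree d (fun x => s (s x)) (fun x => x)); auto.
  apply PO_comp; auto. apply PO_id. Qed.

Lemma inW_of d s : PO d s -> (forall x, s (s x) = x) -> inW d s.
Proof. intros [Hp Ho] I. split; [|split; [|split]]; auto.
  - intros x y E. rewrite <- (I x), <- (I y), E. reflexivity.
  - intros y. exists (s y). apply I. Qed.

Lemma inW_PO d g : inW d g -> PO d g.
Proof. intros (_&_&A&B). split; auto. Qed.

Lemma sref_PO d j : 0 <= d -> PO d (sref d j).
Proof. intros Hd. unfold sref. destruct (j =? 0); [|destruct (j =? d)]; apply ext_PO; auto. Qed.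

Lemma sref0_val d k : 1 <= k <= d -> sref d 0 k = if k =? 1 then -1 else k.
Proof. intros. unfold sref. simpl. rewrite ext_val by auto; reflexivity. Qed.

Lemma srefd_val d k : 1 <= d -> 1 <= k <= d -> sref d d k = if k =? d then d + 2 else k.
Proof. intros. unfold sref. destruct (Z.eqb_spec d 0); [lia|]. rewrite Z.eqb_refl. rewrite ext_val by auto; reflexivity. Qed.

Lemma srefj_val d j k : 1 <= j <= d - 1 -> 1 <= k <= d ->
  sref d j k = if k =? j then j + 1 else if k =? j + 1 then j else k.
Proof. intros. unfold sref. destruct (Z.eqb_spec j 0); [lia|].
  destruct (Z.eqb_spec j d); [lia|]. rewrite ext_val by auto; reflexivity. Qed.

Lemma sref_inv d j : 1 <= d -> 0 <= j <= d -> forall x, sref d j (sref d j x) = x.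
Proof.
  intros Hd Hj. apply (inv_from_vals d); [lia| apply sref_PO; lia |].
  intros k Hk.
  destruct (Z.eq_dec j 0) as [->|].
  { rewrite (sref0_val d k Hk). destruct (Z.eqb_spec k 1).
    - destruct (sref_PO d 0 ltac:(lia)) as [_ Ho]. assert (E := Ho 1). simpl in E. rewrite E, sref0_val by lia. subst; reflexivity.
    - rewrite sref0_val by lia. destruct (Z.eqb_spec k 1); [lia|reflexivity]. }
  destruct (Z.eq_dec j d) as [->|].
  { rewrite (srefd_val d k) by lia. destruct (Z.eqb_spec k d).
    - replace (d + 2) with (DD d - d) by (unfold DD; lia).
      rewrite (PO_refl d _ (sref_PO d d ltac:(lia))), srefd_val, Z.eqb_refl by lia.
      unfold DD; lia.
    - rewrite srefd_val by lia. destruct (Z.eqb_spec k d); [lia|reflexivity]. }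
  rewrite (srefj_val d j k) by lia.
  destruct (Z.eqb_spec k j).
  - rewrite srefj_val by lia. destruct (Z.eqb_spec (j+1) j); [lia|]. rewrite Z.eqb_refl. lia.
  - destruct (Z.eqb_spec k (j+1)).
    + rewrite srefj_val by lia. rewrite Z.eqb_refl. lia.
    + rewrite srefj_val by lia. destruct (Z.eqb_spec k j); [lia|].
      destruct (Z.eqb_spec k (j+1)); [lia|reflexivity].
Qed.

Lemma stab_id d X : Stab d X (fun x => x).
Proof. split; [|split]; auto.
  - apply inW_of; [apply PO_id | reflexivity].
  - intros y Hy. exists y; auto. Qed.

Lemma inW_comp d f g : inW d f -> inW d g -> inW d (fun x => f (g x)).
Proof. intros (If&Sf&Pf&Of) (Ig&Sg&Pg&Og). split; [|split;[|split]].
  - intros x y E. apply Ig, If, E.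
  - intros y. destruct (Sf y) as [z Hz]. destruct (Sg z) as [w Hw]. exists w. congruence.
  - intros i. rewrite Pg, Pf. reflexivity.
  - intros i. rewrite Og, Of. reflexivity. Qed.

Lemma stab_comp d X f g : Stab d X f -> Stab d X g -> Stab d X (fun x => f (g x)).
Proof. intros (Wf&Af&Bf) (Wg&Ag&Bg). split; [|split].
  - apply inW_comp; auto.
  - auto.
  - intros y Hy. destruct (Bf y Hy) as [z [Hz Ez]]. destruct (Bg z Hz) as [w [Hw Ew]].
    exists w. split; congruence. Qed.

Lemma stab_inv d X f h : Stab d X f -> inW d h -> (forall x, f (h x) = x) -> Stab d X h.
Proof. intros (Wf&Af&Bf) Wh E. split; [auto|split].
  - intros x Hx. destruct (Bf x Hx) as [x' [Hx' Ex']].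
    assert (h (f x') = x'). { apply (proj1 Wf). rewrite E. reflexivity. }
    congruence.
  - intros y Hy. exists (f y). split; auto. apply (proj1 Wf). rewrite E. reflexivity. Qed.

Lemma stab_ext d X f h : Stab d X f -> (forall x, f x = h x) -> Stab d X h.
Proof. intros (Wf&Af&Bf) E. assert (Eq : f = h) by (apply functional_extensionality; auto).
  subst; split; auto. Qed.

Lemma stab_invol d X s : PO d s -> (forall x, s (s x) = x) -> (forall x, X x -> X (s x)) -> Stab d X s.
Proof. intros P I A. split; [apply inW_of; auto|split; auto].
  intros y Hy. exists (s y). split; auto. Qed.

Lemma firstn_S_sum (l : list nat) n :
  list_sum (firstn (S n) l) = (list_sum (firstn n l) + nth n l 0)%nat.
Proof.
  revert n; induction l as [|a l IH]; intros n.
  - destruct n; reflexivity.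
  - destruct n.
    + cbn [firstn nth list_sum fold_right]. lia.
    + change (list_sum (firstn (S (S n)) (a :: l))) with (a + list_sum (firstn (S n) l))%nat.
      change (list_sum (firstn (S n) (a :: l))) with (a + list_sum (firstn n l))%nat.
      rewrite IH. simpl nth. lia.
Qed.

Lemma L0 lam : lam0 lam 0 = lamZ lam 0.
Proof. unfold lam0, lamZ. simpl plus. rewrite firstn_S_sum. simpl. lia. Qed.

Lemma LS lam i : lam0 lam (S i) = lam0 lam i + lamZ lam (S i).
Proof. unfold lam0, lamZ. replace (S i + 1)%nat with (S (i + 1)) by lia.
  rewrite firstn_S_sum, Nat2Z.inj_add. replace (i+1)%nat with (S i) by lia. reflexivity. Qed.

Lemma L_nonneg lam i : 0 <= lam0 lam i.
Proof. unfold lam0. lia. Qed.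

Lemma lamZ_nonneg lam i : 0 <= lamZ lam i.
Proof. unfold lamZ. lia. Qed.

Lemma L_mono lam i j : (i <= j)%nat -> lam0 lam i <= lam0 lam j.
Proof. induction 1. lia. rewrite LS. pose proof (lamZ_nonneg lam (S m)). lia. Qed.

Lemma L_lt_inv lam i j : lam0 lam i < lam0 lam j -> (i < j)%nat.
Proof. intros H. destruct (Nat.lt_ge_cases i j); auto.
  pose proof (L_mono lam j i H0). lia. Qed.

Lemma L_last r d lam : inLambda r d lam -> lam0 lam r + lamZ lam (r+1) = Z.of_nat d.
Proof. intros [Hl Hs]. replace (r+1)%nat with (S r) by lia. rewrite <- LS.
  unfold lam0. rewrite firstn_all2 by lia. lia. Qed.

Lemma L_le_d r d lam i : inLambda r d lam -> (i <= r)%nat -> lam0 lam i <= Z.of_nat d.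
Proof. intros H Hi. pose proof (L_last r d lam H). pose proof (L_mono lam i r Hi).
  pose proof (lamZ_nonneg lam (r+1)). lia. Qed.

Lemma Rint0 r d lam x : Rint r d lam 0 x <-> - lam0 lam 0 <= x <= lam0 lam 0.
Proof. rewrite L0. unfold Rint. simpl. tauto. Qed.

Lemma Rint_last r d lam x : Rint r d lam (r+1) x <->
  Z.of_nat d + 1 - lamZ lam (r + 1) <= x <= Z.of_nat d + 1 + lamZ lam (r + 1).
Proof. unfold Rint. destruct (Nat.eqb_spec (r+1) 0); [lia|]. rewrite Nat.eqb_refl. tauto. Qed.

Lemma Rint_mid r d lam i x : (1 <= i <= r)%nat -> Rint r d lam i x <->
  lam0 lam (i - 1) < x <= lam0 lam i.
Proof. intros Hi. unfold Rint. destruct (Nat.eqb_spec i 0); [lia|].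
  destruct (Nat.eqb_spec i (r+1)); [lia|]. tauto. Qed.

Definition St r d lam g :=
  forall i : nat, (i <= r + 1)%nat -> Stab (Z.of_nat d) (Rint r d lam i) g.

Lemma stab_of r d lam s : (2 <= d)%nat -> inLambda r d lam ->
  PO (Z.of_nat d) s -> (forall x, s (s x) = x) ->
  (forall k, 1 <= k <= Z.of_nat d -> k <= lam0 lam 0 -> - lam0 lam 0 <= s k <= lam0 lam 0) ->
  (forall k i, 1 <= k <= Z.of_nat d -> (1 <= i <= r)%nat ->
     lam0 lam (i-1) < k <= lam0 lam i -> lam0 lam (i-1) < s k <= lam0 lam i) ->
  (forall k, 1 <= k <= Z.of_nat d -> lam0 lam r + 1 <= k ->
     lam0 lam r + 1 <= s k <= Z.of_nat d + 1 + lamZ lam (r+1)) ->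
  St r d lam s.
Proof.
  intros Hd HL P I Ha Hb Hc i Hi.
  pose proof (L_last r d lam HL) as HLast.
  pose proof (lamZ_nonneg lam (r+1)).
  pose proof (L_nonneg lam r).
  apply stab_invol; auto. intros x Hx.
  destruct (Nat.eq_dec i 0) as [->|].
  { rewrite Rint0 in *. pose proof (L_le_d r d lam 0 HL ltac:(lia)).
    destruct (Z.lt_trichotomy x 0) as [Hn|[->|Hp]].
    - replace x with (- (- x)) by lia. rewrite (proj2 P). specialize (Ha (-x)). lia.
    - rewrite (PO_zero _ _ P). lia.
    - specialize (Ha x). lia. }
  destruct (Nat.eq_dec i (r+1)) as [->|].
  { rewrite Rint_last in *.
    destruct (Z_le_gt_dec x (Z.of_nat d)).
    - specialize (Hc x). lia.
    - destruct (Z.eq_dec x (Z.of_nat d + 1)) as [->|].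
      + rewrite (PO_half _ _ P). lia.
      + replace x with (DD (Z.of_nat d) - (DD (Z.of_nat d) - x)) by lia.
        rewrite (PO_refl _ _ P). specialize (Hc (DD (Z.of_nat d) - x)). unfold DD in *. lia. }
  rewrite Rint_mid in * by lia.
  pose proof (L_nonneg lam (i-1)). pose proof (L_le_d r d lam i HL ltac:(lia)).
  apply Hb; lia.
Qed.

Definition allowed r lam j := forall i : nat, (i <= r)%nat -> j <> lam0 lam i.

Lemma gen_St r d lam j : (2 <= d)%nat -> inLambda r d lam ->
  0 <= j <= Z.of_nat d -> allowed r lam j -> St r d lam (sref (Z.of_nat d) j).
Proof.
  intros Hd HL Hj Al.
  pose proof (L_last r d lam HL) as HLast.
  pose proof (lamZ_nonneg lam (r+1)).
  pose proof (L_nonneg lam r).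
  pose proof (L_le_d r d lam 0 HL ltac:(lia)).
  pose proof (L_nonneg lam 0).
  pose proof (Al 0%nat ltac:(lia)). pose proof (Al r ltac:(lia)).
  apply stab_of; auto.
  - apply sref_PO; lia.
  - apply sref_inv; lia.
  - intros k Hk Hk0.
    destruct (Z.eq_dec j 0) as [->|].
    { rewrite sref0_val by lia. destruct (Z.eqb_spec k 1); lia. }
    destruct (Z.eq_dec j (Z.of_nat d)) as [->|].
    { rewrite srefd_val by lia. destruct (Z.eqb_spec k (Z.of_nat d)); lia. }
    rewrite srefj_val by lia.
    destruct (Z.eqb_spec k j); [lia|]. destruct (Z.eqb_spec k (j+1)); lia.
  - intros k i Hk Hi Hki.
    pose proof (Al i ltac:(lia)). pose proof (Al (i-1)%nat ltac:(lia)).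
    pose proof (L_nonneg lam (i-1)). pose proof (L_le_d r d lam i HL ltac:(lia)).
    destruct (Z.eq_dec j 0) as [->|].
    { rewrite sref0_val by lia. destruct (Z.eqb_spec k 1); lia. }
    destruct (Z.eq_dec j (Z.of_nat d)) as [->|].
    { rewrite srefd_val by lia. destruct (Z.eqb_spec k (Z.of_nat d)); lia. }
    rewrite srefj_val by lia.
    destruct (Z.eqb_spec k j); [lia|]. destruct (Z.eqb_spec k (j+1)); lia.
  - intros k Hk Hk0.
    destruct (Z.eq_dec j 0) as [->|].
    { rewrite sref0_val by lia. destruct (Z.eqb_spec k 1); lia. }
    destruct (Z.eq_dec j (Z.of_nat d)) as [->|].
    { rewrite srefd_val by lia. destruct (Z.eqb_spec k (Z.of_nat d)); lia. }
    rewrite srefj_val by lia.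
    destruct (Z.eqb_spec k j); [lia|]. destruct (Z.eqb_spec k (j+1)); lia.
Qed.

Lemma forward r d lam g : (2 <= d)%nat -> inLambda r d lam -> Wlam r d lam g -> St r d lam g.
Proof.
  intros Hd HL H. unfold Wlam in H. induction H; intros i Hi.
  - destruct H as [j [Hj [Al ->]]]. apply gen_St; auto.
  - apply stab_id.
  - apply stab_comp; auto.
  - eapply stab_inv; eauto.
  - eapply stab_ext; eauto.
Qed.

Lemma region lam r k : 1 <= k -> k <= lam0 lam 0 \/ lam0 lam r < k \/
  exists i, (1 <= i <= r)%nat /\ lam0 lam (i-1) < k <= lam0 lam i.
Proof.
  intros Hk. induction r as [|m IH].
  - lia.
  - destruct IH as [A|[B|[i [Hi Hi2]]]].
    + auto.
    + destruct (Z_lt_le_dec (lam0 lam (S m)) k); auto.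
      right; right. exists (S m). replace (S m - 1)%nat with m by lia. split; [lia|lia].
    + right; right. exists i. split; [lia|lia].
Qed.


Lemma St_facts r d lam g : (2 <= d)%nat -> inLambda r d lam -> St r d lam g ->
  inW (Z.of_nat d) g /\
  (forall k, 1 <= k <= Z.of_nat d -> k <= lam0 lam 0 -> - lam0 lam 0 <= g k <= lam0 lam 0) /\
  (forall k i, 1 <= k <= Z.of_nat d -> (1 <= i <= r)%nat ->
     lam0 lam (i-1) < k <= lam0 lam i -> lam0 lam (i-1) < g k <= lam0 lam i) /\
  (forall k, 1 <= k <= Z.of_nat d -> lam0 lam r + 1 <= k ->
     lam0 lam r + 1 <= g k <= Z.of_nat d + 1 + lamZ lam (r+1)).
Proof.
  intros Hd HL H. pose proof (L_last r d lam HL).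
  split; [apply (H 0%nat ltac:(lia))|split; [|split]].
  - intros k Hk Hk0. destruct (H 0%nat ltac:(lia)) as (_&A&_).
    specialize (A k). rewrite !Rint0 in A. pose proof (L_nonneg lam 0). apply A; lia.
  - intros k i Hk Hi Hki. destruct (H i ltac:(lia)) as (_&A&_).
    specialize (A k). rewrite !Rint_mid in A by lia. auto.
  - intros k Hk Hk0. destruct (H (r+1)%nat ltac:(lia)) as (_&A&_).
    specialize (A k). rewrite !Rint_last in A. pose proof (lamZ_nonneg lam (r+1)). lia.
Qed.

Lemma no_descent_id r d lam g : (2 <= d)%nat -> inLambda r d lam -> St r d lam g ->
  ~ (allowed r lam 0 /\ g 1 < 0) ->
  ~ (exists j, 1 <= j <= Z.of_nat d - 1 /\ allowed r lam j /\ g (j+1) < g j) ->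
  ~ (allowed r lam (Z.of_nat d) /\ Z.of_nat d + 1 < g (Z.of_nat d)) ->
  forall x, g x = x.
Proof.
  intros Hd HL H N0 Nj Nd.
  destruct (St_facts r d lam g Hd HL H) as (W & Ha & Hb & Hc).
  pose proof (inW_PO _ _ W) as P. destruct W as (Inj & _).
  set (dZ := Z.of_nat d) in *.
  pose proof (L_last r d lam HL) as HLast.
  pose proof (L_nonneg lam r). pose proof (lamZ_nonneg lam (r+1)).
  assert (up : forall k, 1 <= k <= dZ -> (k > 1 -> g (k-1) >= k-1) -> g k >= k).
  { intros k Hk IH.
    destruct (classic (allowed r lam (k-1))) as [A|A].
    - destruct (Z.eq_dec k 1) as [->|].
      + assert (g 1 <> 0). { intros E. rewrite <- (PO_zero _ _ P) in E. apply Inj in E. lia. }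
        assert (~ g 1 < 0) by (intros C; apply N0; auto). lia.
      + assert (g (k-1) <> g k) by (intros E; apply Inj in E; lia).
        assert (~ g k < g (k-1)).
        { intros C. apply Nj. exists (k-1). replace (k-1+1) with k by lia. split; [lia|auto]. }
        specialize (IH ltac:(lia)). lia.
    - unfold allowed in A. apply not_all_ex_not in A. destruct A as [i' A].
      apply imply_to_and in A. destruct A as [Hi' A]. apply NNPP in A.
      destruct (region lam r k ltac:(lia)) as [R|[R|[i [Hi R]]]].
      + pose proof (L_mono lam 0 i' ltac:(lia)). lia.
      + pose proof (L_mono lam i' r Hi'). specialize (Hc k). lia.
      + assert (lam0 lam i' < lam0 lam i) by lia. apply L_lt_inv in H2.
        pose proof (L_mono lam i' (i-1) ltac:(lia)). specialize (Hb k i). lia. }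
  assert (down : forall k, 1 <= k <= dZ -> (k < dZ -> g (k+1) <= k+1) -> g k <= k).
  { intros k Hk IH.
    destruct (classic (allowed r lam k)) as [A|A].
    - destruct (Z.eq_dec k dZ) as [->|].
      + assert (g dZ <> dZ + 1). { intros E. rewrite <- (PO_half _ _ P) in E. apply Inj in E. lia. }
        assert (~ dZ + 1 < g dZ) by (intros C; apply Nd; auto). lia.
      + assert (g k <> g (k+1)) by (intros E; apply Inj in E; lia).
        assert (~ g (k+1) < g k).
        { intros C. apply Nj. exists k. split; [lia|auto]. }
        specialize (IH ltac:(lia)). lia.
    - unfold allowed in A. apply not_all_ex_not in A. destruct A as [i' A].
      apply imply_to_and in A. destruct A as [Hi' A]. apply NNPP in A.
      destruct (region lam r k ltac:(lia)) as [R|[R|[i [Hi R]]]].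
      + pose proof (L_mono lam 0 i' ltac:(lia)). specialize (Ha k). lia.
      + pose proof (L_mono lam i' r Hi'). lia.
      + assert (lam0 lam (i-1) < lam0 lam i') by lia. apply L_lt_inv in H2.
        pose proof (L_mono lam i i' ltac:(lia)). specialize (Hb k i). lia. }
  assert (UP : forall n : nat, 1 <= Z.of_nat n <= dZ -> g (Z.of_nat n) >= Z.of_nat n).
  { induction n as [|n IHn]; intros Hn; [lia|].
    apply up; [lia|]. intros Hgt. replace (Z.of_nat (S n) - 1) with (Z.of_nat n) by lia.
    apply IHn; lia. }
  assert (DN : forall m : nat, 1 <= dZ - Z.of_nat m <= dZ -> g (dZ - Z.of_nat m) <= dZ - Z.of_nat m).
  { induction m as [|m IHm]; intros Hm.
    - apply down; [lia|]. intros; lia.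
    - apply down; [lia|]. intros _. replace (dZ - Z.of_nat (S m) + 1) with (dZ - Z.of_nat m) by lia.
      apply IHm; lia. }
  apply (PO_agree dZ g (fun x => x)); [lia|auto|apply PO_id|].
  intros k Hk. 
  pose proof (UP (Z.to_nat k) ltac:(lia)). pose proof (DN (Z.to_nat (dZ - k)) ltac:(lia)).
  rewrite Z2Nat.id in * by lia. replace (dZ - (dZ - k)) with k in * by lia. lia.
Qed.

Fixpoint Ssum (f : Z -> Z) (n : nat) : Z :=
  match n with O => 0 | S m => Ssum f m + f (Z.of_nat (S m)) end.

Lemma S_ext f h n : (forall k, 1 <= k <= Z.of_nat n -> f k = h k) -> Ssum f n = Ssum h n.
Proof. induction n; intros H; cbn [Ssum]; auto.
  rewrite IHn. rewrite H. reflexivity. lia. intros k Hk. apply H. lia. Qed.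

Lemma S_nonneg f n : (forall k, 0 <= f k) -> 0 <= Ssum f n.
Proof. intros H; induction n; cbn [Ssum]. lia. specialize (H (Z.of_nat (S n))). lia. Qed.

Lemma S_update f h a n : (forall k, 1 <= k <= Z.of_nat n -> k <> a -> f k = h k) ->
  1 <= a <= Z.of_nat n -> Ssum f n = Ssum h n + f a - h a.
Proof.
  induction n; intros H Ha; [lia|]. cbn [Ssum].
  destruct (Z.eq_dec a (Z.of_nat (S n))) as [->|].
  - rewrite (S_ext f h n). lia. intros k Hk. apply H; lia.
  - rewrite IHn; [ | intros k Hk Hka; apply H; lia | lia].
    rewrite (H (Z.of_nat (S n))); lia.
Qed.

Definition Pot d (g : Z -> Z) := Ssum (fun k => (g k - k) * (g k - k)) d.

Lemma Pot_nonneg d g : 0 <= Pot d g.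
Proof. apply S_nonneg. intros k; apply Z.square_nonneg. Qed.

Lemma main_back r d lam : (2 <= d)%nat -> inLambda r d lam ->
  forall n : nat, forall g, St r d lam g -> Pot d g < Z.of_nat n -> Wlam r d lam g.
Proof.
  intros Hd HL n. induction n as [|n IH]; intros g H HP.
  { pose proof (Pot_nonneg d g). lia. }
  set (dZ := Z.of_nat d) in *.
  destruct (St_facts r d lam g Hd HL H) as (W & _).
  pose proof (inW_PO _ _ W) as P.
  assert (Red : forall j, 0 <= j <= dZ -> allowed r lam j ->
            Pot d (fun x => g (sref dZ j x)) < Pot d g -> Wlam r d lam g).
  { intros j Hj Al Hlt.
    assert (Wg' : Wlam r d lam (fun x => g (sref dZ j x))).
    { apply IH. - intros i Hi. apply stab_comp; [apply H; auto| apply (gen_St r d lam j); auto].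
      - lia. }
    unfold Wlam. apply (gen_ext _ _ (fun x => (fun y => g (sref dZ j y)) (sref dZ j x))).
    - apply (gen_comp _ _ (fun y => g (sref dZ j y)) (sref dZ j)); [exact Wg'|]. apply gen_gen. exists j. auto.
    - intros x. simpl. rewrite sref_inv by lia. reflexivity. }
  destruct (classic (allowed r lam 0 /\ g 1 < 0)) as [[A C]|N0].
  { apply (Red 0); auto; [lia|].
    unfold Pot. erewrite (S_update _ (fun k => (g k - k) * (g k - k)) 1 d).
    - rewrite sref0_val by lia. simpl.
      replace (-1) with (- (1)) by reflexivity. rewrite (proj2 P). nia.
    - intros k Hk Hk1. rewrite sref0_val by lia. destruct (Z.eqb_spec k 1); [lia|reflexivity].
    - lia. }
  destruct (classic (allowed r lam dZ /\ dZ + 1 < g dZ)) as [[A C]|Nd].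
  { apply (Red dZ); auto; [lia|].
    unfold Pot. erewrite (S_update _ (fun k => (g k - k) * (g k - k)) dZ d).
    - rewrite srefd_val by lia. rewrite Z.eqb_refl.
      replace (dZ + 2) with (DD dZ - dZ) by (unfold DD; lia).
      rewrite (PO_refl _ _ P). unfold DD. nia.
    - intros k Hk Hk1. rewrite srefd_val by lia. destruct (Z.eqb_spec k dZ); [lia|reflexivity].
    - lia. }
  destruct (classic (exists j, 1 <= j <= dZ - 1 /\ allowed r lam j /\ g (j+1) < g j))
    as [[j [Hj [A C]]]|Nj].
  { apply (Red j); auto; [lia|].
    unfold Pot.
    set (T' := fun k => (g (sref dZ j k) - k) * (g (sref dZ j k) - k)).
    set (T := fun k => (g k - k) * (g k - k)).
    set (m := fun k => if k =? j then T' j else T k).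
    rewrite (S_update T' m (j+1) d).
    rewrite (S_update m T j d).
    - unfold m, T', T. rewrite Z.eqb_refl. destruct (Z.eqb_spec (j+1) j); [lia|].
      rewrite !srefj_val by lia. rewrite Z.eqb_refl. destruct (Z.eqb_spec (j+1) j); [lia|].
      rewrite ?Z.eqb_refl. nia.
    - intros k Hk Hkj. unfold m. destruct (Z.eqb_spec k j); [lia|reflexivity].
    - lia.
    - intros k Hk Hkj. unfold m, T', T. destruct (Z.eqb_spec k j); [subst; reflexivity|].
      rewrite srefj_val by lia. destruct (Z.eqb_spec k j); [lia|].
      destruct (Z.eqb_spec k (j+1)); [lia|reflexivity].
    - lia. }
  assert (E : forall x, g x = x) by (apply (no_descent_id r d lam g); auto).
  unfold Wlam. apply (gen_ext _ _ (fun x => x)); [apply gen_id|]. intros x; auto.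
Qed.

Theorem lemma2p2p1 (r d : nat) (lam : list nat) :
  (2 <= d)%nat -> inLambda r d lam ->
  forall g : Z -> Z,
    Wlam r d lam g <->
    (forall i : nat, (i <= r + 1)%nat -> Stab (Z.of_nat d) (Rint r d lam i) g).
Proof.
  intros Hd HL g. split.
  - apply forward; auto.
  - intros H. apply (main_back r d lam Hd HL (S (Z.to_nat (Pot d g)))); auto.
    pose proof (Pot_nonneg d g). lia.
Qed.
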